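(* Let $X_1,\dots,X_d$ be discrete random variables, $X_j\in\{0,\dots,r_j\}$, fix $M\subseteq\{1,\dots,d\}$, and assume complete independence of $(X_j)_{j\in M}$ with strictly positive joint probability vector $\pi=p(M)$. Let $\mathcal V=\bigcup_k\mathcal P(N_k)$ for a family of subsets $N_k\subsetneq M$, $a,b\subseteq M$ disjoint nonempty, $\mathcal A=\{t\subseteq M: t\cap a\ne\emptyset, t\cap b\ne\emptyset\}$, $\mathcal I\subseteq\mathcal V\cap\mathcal A$ and $\mathcal R=\mathcal V\setminus\mathcal I$. If $\mathcal H$ is a valid replacement for $\mathcal I$, then the matrix $Q_{\mathcal I\mathcal H\mid\mathcal R}=F_{\mathcal I\mathcal H}-F_{\mathcal I\mathcal R}F_{\mathcal R\mathcal R}^{-1}F_{\mathcal R\mathcal H}$ is non singular.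
   Context: $\mathcal P(\cdot)$ denotes the family of nonempty subsets. For $r\subseteq M$, $G_r=\bigotimes_{j\in M}G_j$ with $G_j$ the identity of order $r_j+1$ without its first column if $j\in r$ and $\mathbf 1_{r_j+1}$ otherwise. For disjoint $t,h$ and categories $j_h$ (all nonzero), $G_{t,h}(j_h)$ is the submatrix of $G_{t\cup h}$ formed by the columns with the variables in $h$ equal to $j_h$. $G_{\mathcal I}$ (resp. $G_{\mathcal R}$) juxtaposes $G_t$ for $t\in\mathcal I$ (resp. $\mathcal R$); $G_{\mathcal H}$ juxtaposes the blocks $G_{t,h}(j_h)$ for the elements $t\cup h$ of $\mathcal H$. $\Omega=\mathrm{diag}(\pi)-\pi\pi'$, $F_{\mathcal X\mathcal Y}=G_{\mathcal X}'\Omega G_{\mathcal Y}$. Let $\mathcal K$ be the family of maximal sets of $\mathcal I\cup\mathcal R$; for $t\in\mathcal I$, $\mathcal K(t)=\{m\in\mathcal K:t\subseteq m\}$, $\mathcal K(t,h)$ is the family of nonempty $\mathcal G\subseteq\mathcal K(t)$ with $h\cap\bigcap_{m\in\mathcal G}m=\emptyset$, and $\bar{\mathcal K}(t,h)=\mathcal P(\mathcal K)\setminus\mathcal K(t,h)$. $\mathcal H$ is a valid replacement for $\mathcal I$ if: (i) there is a one-to-one correspondence between $\mathcal I$ and $\mathcal H$ such that each $t\in\mathcal I$ corresponds to some $t\cup h\in\mathcal H$ with $t\cap h=\emptyset$, the variables of $h$ being fixed to given categories $j_h$ different from the reference category $0$; (ii) $\sum_{\mathcal G\in\mathcal K(t,h)}(-1)^{|\mathcal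 G|}\ne0$ for each such pair; (iii) there is a total order $\prec$ on $\mathcal I$ compatible with set inclusion such that for every $t\cup h\in\mathcal H$ and $\mathcal G\in\bar{\mathcal K}(t,h)$, the set $s=(\bigcap_{m\in\mathcal G}m)\cap(t\cup h)$ satisfies either $s\in\mathcal R$, or $s\in\mathcal I$ and $s\prec t$. *)

(* Defs.v *)
From mathcomp Require Import all_boot all_order all_algebra.
Set Implicit Arguments. Unset Strict Implicit. Unset Printing Implicit Defensive.
Import Order.TTheory GRing.Theory Num.Theory.
Local Open Scope ring_scope.

(* Variables X_j, j : 'I_d, with X_j in {0,...,r j}.  A (full) assignment of
   categories to all variables. *)
Definition assign (d : nat) (r : 'I_d -> nat) :=
  {dffun forall j : 'I_d, 'I_(r j).+1}.

(* Cells of the contingency table of the variables in M: assignments that are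
   0 (irrelevant) outside M.  These index the entries of pi = p(M). *)
Definition cell (d : nat) (r : 'I_d -> nat) (M : {set 'I_d}) :=
  {x : assign r | [forall j, (j \notin M) ==> (x j == ord0)]}.

Definition supp_is (d : nat) (r : 'I_d -> nat) (t : {set 'I_d}) (c : assign r) :=
  [forall j, (j \in t) == (c j != ord0)].

(* Column indices of the juxtaposed matrix G_S for a family S of sets:
   pairs (t, c), t in S, c a choice of nonzero categories for the variables
   of t (the columns of G_t = Kronecker product of identities without first
   column and vectors of ones). *)
Definition colT (d : nat) (r : 'I_d -> nat) (S : {set {set 'I_d}}) :=
  {p : {set 'I_d} * assign r | (p.1 \in S) && supp_is p.1 p.2}.

Definition cellv (d : nat) (r : 'I_d -> nat) (M : {set 'I_d})
  (i : 'I_#|{: cell r M}|) : cell r M := enum_val i.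
Definition colv (d : nat) (r : 'I_d -> nat) (S : {set {set 'I_d}})
  (k : 'I_#|{: colT r S}|) : colT r S := enum_val k.

Definition Gmx (R : nzRingType) (d : nat) (r : 'I_d -> nat) (M : {set 'I_d})
  (S : {set {set 'I_d}}) : 'M[R]_(#|{: cell r M}|, #|{: colT r S}|) :=
  \matrix_(i, k)
    (let x := val (cellv i) in let p := val (colv k) in
     if [forall j in p.1, x j == p.2 j] then 1 else 0).

(* G_H : for each t in I, the block G_{t,h}(j_h) with h = h t, j_h = jh t:
   columns of G_{t u h} whose variables in h are fixed to the categories j_h. *)
Definition GHmx (R : nzRingType) (d : nat) (r : 'I_d -> nat) (M : {set 'I_d})
  (I : {set {set 'I_d}}) (h : {set 'I_d} -> {set 'I_d})
  (jh : {set 'I_d} -> assign r) : 'M[R]_(#|{: cell r M}|, #|{: colT r I}|) :=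
  \matrix_(i, k)
    (let x := val (cellv i) in let p := val (colv k) in
     if [forall j in p.1, x j == p.2 j] && [forall j in h p.1, x j == jh p.1 j]
     then 1 else 0).

Definition Omega (R : nzRingType) (d : nat) (r : 'I_d -> nat) (M : {set 'I_d})
  (pi : cell r M -> R) : 'M[R]_(#|{: cell r M}|) :=
  diag_mx (\row_i pi (cellv i)) -
  (\col_i pi (cellv i)) *m (\col_i pi (cellv i))^T.

Definition marg (R : nzRingType) (d : nat) (r : 'I_d -> nat) (M : {set 'I_d})
  (pi : cell r M -> R) (j : 'I_d) (k : 'I_(r j).+1) : R :=
  \sum_(y : cell r M | val y j == k) pi y.

Definition Vfam (d : nat) (N : {set {set 'I_d}}) : {set {set 'I_d}} :=
  [set t : {set 'I_d} | (t != set0) && [exists n in N, t \subset n]].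

Definition Afam (d : nat) (M a b : {set 'I_d}) : {set {set 'I_d}} :=
  [set t : {set 'I_d} | [&& t \subset M, t :&: a != set0 & t :&: b != set0]].

Definition maxfam (d : nat) (F : {set {set 'I_d}}) : {set {set 'I_d}} :=
  [set m in F | [forall m' in F, (m \subset m') ==> (m' == m)]].

Definition Kt (d : nat) (K : {set {set 'I_d}}) (t : {set 'I_d}) :=
  [set m in K | t \subset m].

Definition Kth (d : nat) (K : {set {set 'I_d}}) (t h : {set 'I_d})
  : {set {set {set 'I_d}}} :=
  [set G in powerset (Kt K t) |
     (G != set0) && (h :&: \bigcap_(m in G) m == set0)].

Definition Kbar (d : nat) (K : {set {set 'I_d}}) (t h : {set 'I_d})
  : {set {set {set 'I_d}}} :=
  [set G in powerset K | (G != set0) && (G \notin Kth K t h)].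

(* H (given by h and jh, indexed by I) is a valid replacement for I,
   relative to R; the maximal sets K are those of I u R. *)
Definition valid_replacement (d : nat) (r : 'I_d -> nat) (M : {set 'I_d})
  (I Rf : {set {set 'I_d}}) (h : {set 'I_d} -> {set 'I_d})
  (jh : {set 'I_d} -> assign r) : Prop :=
  let K := maxfam (I :|: Rf) in
  (forall t, t \in I ->
     [/\ h t \subset M, [disjoint t & h t] &
         forall j, j \in h t -> jh t j != ord0]) /\
  (forall t, t \in I ->
     (\sum_(G in Kth K t (h t)) (-1) ^+ #|G| : int) != 0) /\
  (* (iii) total order on I compatible with inclusion, encoded by an
     injective rank function: s < t iff rk s < rk t *)
  (exists rk : {set 'I_d} -> nat,
     {in I &, injective rk} /\
     (forall s t, s \in I -> t \in I -> s \proper t -> (rk s < rk t)%N) /\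
     (forall t, t \in I -> forall G, G \in Kbar K t (h t) ->
        let s := (\bigcap_(m in G) m) :&: (t :|: h t) in
        s \in Rf \/ (s \in I /\ (rk s < rk t)%N))).

Definition Qmx (R : fieldType) (d : nat) (r : 'I_d -> nat) (M : {set 'I_d})
  (pi : cell r M -> R) (I Rf : {set {set 'I_d}}) (h : {set 'I_d} -> {set 'I_d})
  (jh : {set 'I_d} -> assign r) : 'M[R]_(#|{: colT r I}|) :=
  let Om := Omega pi in
  let GI := @Gmx R d r M I in
  let GR := @Gmx R d r M Rf in
  let GH := @GHmx R d r M I h jh in
  let F (m n : nat) (A : 'M[R]_(_, m)) (B : 'M[R]_(_, n)) := A^T *m Om *m B in
  F _ _ GI GH - F _ _ GI GR *m invmx (F _ _ GR GR) *m F _ _ GR GH.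

(* Main.v *)
Require Import Defs.
From mathcomp Require Import all_boot all_order all_algebra.
From mathcomp Require Import ring lra.
Set Implicit Arguments. Unset Strict Implicit. Unset Printing Implicit Defensive.
Import Order.TTheory GRing.Theory Num.Theory.
Local Open Scope ring_scope.

Section Prob.
Variables (R : realFieldType) (d : nat) (r : 'I_d -> nat) (M : {set 'I_d}).
Variable pi : cell r M -> R.
Hypothesis pi_pos : forall x, 0 < pi x.
Hypothesis pi_sum : \sum_x pi x = 1.
Hypothesis pi_ind : forall x : cell r M, pi x = \prod_(j in M) marg pi (val x j).

Local Notation cellT := (cell r M).

Definition chi (A : {set 'I_d}) (z : assign r) (x : cellT) : R :=
  if [forall j in A, val x j == z j] then 1 else 0.

Definition mixf (s : {set 'I_d}) (x y : assign r) : assign r :=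
  [ffun j => if j \in s then x j else y j].

Lemma mix_cellP s (x y : cellT) :
  [forall j, (j \notin M) ==> (mixf s (val x) (val y) j == ord0)].
Proof.
apply/forallP => j; apply/implyP => jM; rewrite ffunE.
by case: ifP => _; [move: (valP x) | move: (valP y)] => /forallP /(_ j) /implyP /(_ jM).
Qed.

Definition mix s (x y : cellT) : cellT := Sub (mixf s (val x) (val y)) (mix_cellP s x y).

Lemma mixE s x y j : val (mix s x y) j = if j \in s then val x j else val y j.
Proof. by rewrite /= ffunE. Qed.

Lemma mixK s x y : mix s (mix s x y) (mix s y x) = x.
Proof. apply: val_inj; apply: (iffLR (ffunP _ _)) => j /=; rewrite !ffunE; by case: (j \in s). Qed.

Lemma pi_swap s x y : pi x * pi y = pi (mix s x y) * pi (mix s y x).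
Proof.
rewrite !pi_ind -!big_split /=; apply: eq_bigr => j _.
by rewrite !mixE; case: (j \in s) => //; rewrite mulrC.
Qed.

Definition Ex s (phi : cellT -> R) (x : cellT) : R := \sum_y pi y * phi (mix s x y).
Definition Pr B z := \sum_y pi y * chi B z y.

Lemma chi_mix s A z x y :
  chi A z (mix s x y) = chi (A :&: s) z x * chi (A :\: s) z y.
Proof.
rewrite /chi.
have -> : [forall j in A, val (mix s x y) j == z j] =
    [forall j in A :&: s, val x j == z j] && [forall j in A :\: s, val y j == z j].
  apply/forall_inP/andP => [H|[/forall_inP H1 /forall_inP H2]].
    split; apply/forall_inP => j; rewrite !inE => /andP[];
      [move=> jA js | move=> js jA]; have := H j jA;
      by rewrite mixE ?js ?(negbTE js).
  move=> j jA; rewrite mixE; case: ifP => js; [apply: H1 | apply: H2];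
    by rewrite !inE ?js jA.
by case: [forall j in _, _]; case: [forall j in _, _]; rewrite /= ?mul1r ?mul0r.
Qed.

Lemma Ex_chi s A z x : Ex s (chi A z) x = Pr (A :\: s) z * chi (A :&: s) z x.
Proof.
rewrite /Ex /Pr mulr_suml; apply: eq_bigr => y _; rewrite chi_mix.
by rewrite mulrCA mulrC.
Qed.

Lemma Ex_ext s a b : a =1 b -> Ex s a =1 Ex s b.
Proof. by move=> ab x; apply: eq_bigr => y _; rewrite ab. Qed.

Lemma Ex_lin (I : finType) s (al : I -> R) (phi : I -> cellT -> R) x :
  Ex s (fun x => \sum_i al i * phi i x) x = \sum_i al i * Ex s (phi i) x.
Proof.
rewrite /Ex; under eq_bigr do rewrite mulr_sumr; rewrite exchange_big.
apply: eq_bigr => i _; rewrite mulr_sumr; apply: eq_bigr => y _; ring.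
Qed.

Lemma Ex_sumchi (I : finType) s (al : I -> R) A z x :
  Ex s (fun x => \sum_i al i * chi (A i) (z i) x) x =
  \sum_i (al i * Pr (A i :\: s) (z i)) * chi (A i :&: s) (z i) x.
Proof. by rewrite Ex_lin; apply: eq_bigr => i _; rewrite Ex_chi mulrA. Qed.

Definition ip (a b : cellT -> R) := \sum_x pi x * a x * b x.
Definition mean (a : cellT -> R) := \sum_x pi x * a x.
Definition cov a b := ip a b - mean a * mean b.

Lemma Ex_adj s a b : ip (Ex s a) b = ip a (Ex s b).
Proof.
have E1 : ip (Ex s a) b = \sum_p pi p.1 * pi p.2 * a (mix s p.1 p.2) * b p.1.
  rewrite /ip /Ex -(pair_bigA _ (fun x y => pi x * pi y * a (mix s x y) * b x)) /=.
  apply: eq_bigr => x _.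
  rewrite mulr_sumr mulr_suml; apply: eq_bigr => y _; ring.
have E2 : ip a (Ex s b) = \sum_p pi p.1 * pi p.2 * a p.1 * b (mix s p.1 p.2).
  rewrite /ip /Ex -(pair_bigA _ (fun x y => pi x * pi y * a x * b (mix s x y))) /=.
  apply: eq_bigr => x _.
  rewrite mulr_sumr; apply: eq_bigr => y _; ring.
rewrite E1 E2.
pose sg (p : cellT * cellT) := (mix s p.1 p.2, mix s p.2 p.1).
have sgK : involutive sg by case=> x y; rewrite /sg /= !mixK.
rewrite (reindex_inj (inv_inj sgK)) /=; apply: eq_bigr => [[x y]] _ /=.
by rewrite -pi_swap mixK.
Qed.

Lemma mean_ip a : mean a = ip a (fun _ => 1).
Proof. by rewrite /mean /ip; apply: eq_bigr => x _; rewrite mulr1. Qed.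

Lemma Ex1 s x : Ex s (fun _ => 1) x = 1.
Proof. by rewrite /Ex -[RHS]pi_sum; apply: eq_bigr => y _; rewrite mulr1. Qed.

Lemma ip_ext a b b' : b =1 b' -> ip a b = ip a b'.
Proof. by move=> e; apply: eq_bigr => x _; rewrite e. Qed.

Lemma mean_Ex s a : mean (Ex s a) = mean a.
Proof. by rewrite !mean_ip Ex_adj; apply: ip_ext => x; rewrite Ex1. Qed.

Lemma cov_Ex s a b : cov (Ex s a) b = cov a (Ex s b).
Proof. by rewrite /cov Ex_adj !mean_Ex. Qed.

Lemma covC a b : cov a b = cov b a.
Proof.
rewrite /cov /ip mulrC; congr (_ - _); apply: eq_bigr => x _; ring.
Qed.

Lemma cov_ext a a' b : a =1 a' -> cov a b = cov a' b.
Proof.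
by move=> e; rewrite /cov /ip /mean; congr (_ - _ * _); apply: eq_bigr => x _; rewrite e.
Qed.

Lemma cov_ext2 a b b' : b =1 b' -> cov a b = cov a b'.
Proof. by move=> e; rewrite covC (cov_ext _ e) covC. Qed.

Lemma cov_sum (I : finType) a (al : I -> R) (phi : I -> cellT -> R) :
  cov a (fun x => \sum_i al i * phi i x) = \sum_i al i * cov a (phi i).
Proof.
rewrite /cov /ip /mean.
have -> : \sum_x pi x * a x * (\sum_i al i * phi i x) =
          \sum_i al i * \sum_x pi x * a x * phi i x.
  under eq_bigr do rewrite mulr_sumr; rewrite exchange_big.
  by apply: eq_bigr => i _; rewrite mulr_sumr; apply: eq_bigr => x _; ring.
have -> : \sum_x pi x * (\sum_i al i * phi i x) =
          \sum_i al i * \sum_x pi x * phi i x.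
  under eq_bigr do rewrite mulr_sumr; rewrite exchange_big.
  by apply: eq_bigr => i _; rewrite mulr_sumr; apply: eq_bigr => x _; ring.
rewrite mulr_sumr -sumrB; apply: eq_bigr => i _; ring.
Qed.

Lemma cov1 a : cov a (fun _ => 1) = 0.
Proof.
rewrite /cov /ip /mean /=.
under eq_bigr do rewrite mulr1.
under [X in _ * X]eq_bigr do rewrite mulr1.
by rewrite pi_sum mulr1 subrr.
Qed.

Lemma cov0_const a : cov a a = 0 -> forall x, a x = mean a.
Proof.
move=> H x.
have E : cov a a = \sum_y pi y * (a y - mean a) ^+ 2.
  rewrite /cov /ip.
  have -> : \sum_y pi y * (a y - mean a) ^+ 2 =
     \sum_y (pi y * a y * a y - (pi y * a y) * (2 * mean a)) + \sum_y pi y * (mean a ^+ 2).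
    by rewrite -big_split /=; apply: eq_bigr => y _; ring.
  rewrite sumrB -mulr_suml -mulr_suml pi_sum -/(mean a); ring.
have Hn : forall y, predT y -> 0 <= pi y * (a y - mean a) ^+ 2.
  by move=> y _; apply: mulr_ge0; [exact: ltW | exact: sqr_ge0].
move: H; rewrite E => H.
have /(_ x isT) /eqP := psumr_eq0P Hn H.
rewrite mulf_eq0 (gt_eqF (pi_pos x)) /= expf_eq0 /= subr_eq0.
by move/eqP.
Qed.
Definition pt (A : {set 'I_d}) (z : assign r) : cellT.
Proof.
refine (Sub [ffun j => if j \in A :&: M then z j else ord0] _).
apply/forallP => j; apply/implyP => jM; rewrite ffunE inE (negbTE jM) andbF.
by [].
Defined.

Lemma ptE A z j : val (pt A z) j = if j \in A :&: M then z j else ord0.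
Proof. by rewrite /= ffunE. Qed.

Lemma chi_pt (A B : {set 'I_d}) (zA zB : assign r) : A \subset M ->
  [forall j in A, zA j != ord0] ->
  chi A zA (pt B zB) = if (A \subset B) && [forall j in A, zB j == zA j] then 1 else 0.
Proof.
move=> AM /forall_inP nz; rewrite /chi; congr (if _ then _ else _).
apply/forall_inP/andP => [H|[/subsetP AB /forall_inP H] j jA].
  have AB : A \subset B.
    apply/subsetP => j jA; have := H j jA; rewrite ptE inE.
    case: (j \in B) => //= /eqP e; have := nz j jA; by rewrite -e eqxx.
  split => //; apply/forall_inP => j jA; have := H j jA.
  by rewrite ptE inE (subsetP AB j jA) (subsetP AM j jA) eq_sym.
by rewrite ptE inE (AB j jA) (subsetP AM j jA) /=; apply: H.
Qed.

Section LIsec.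
Variables (I : finType) (al : I -> R) (A : I -> {set 'I_d}) (z : I -> assign r).
Hypothesis HM : forall i, A i \subset M.
Hypothesis Hnz : forall i, [forall j in A i, z i j != ord0].
Hypothesis H0 : forall x, \sum_i al i * chi (A i) (z i) x = 0.

Definition grp (A0 : {set 'I_d}) (z0 : assign r) :=
  \sum_(i | (A i == A0) && [forall j in A0, z0 j == z i j]) al i.

Lemma LI_step (A0 : {set 'I_d}) z0 : A0 \subset M ->
  (forall B : {set 'I_d}, B \subset A0 -> B != A0 -> grp B z0 = 0) -> grp A0 z0 = 0.
Proof.
move=> A0M IH.
have := H0 (pt A0 z0).
rewrite (eq_bigr (fun i => if (A i \subset A0) && [forall j in A i, z0 j == z i j]
  then al i else 0)); last by move=> i _; rewrite chi_pt //; case: ifP => _;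
  rewrite ?mulr1 ?mulr0.
rewrite -big_mkcond /=.
rewrite (partition_big A (fun B => B \subset A0)) /=; last by move=> i /andP[].
rewrite (bigD1 A0) //= [X in _ + X]big1 ?addr0.
  move=> <-; rewrite /grp; apply: eq_bigl => i.
  by case: eqP => [->|]; rewrite ?andbF ?subxx //= andbT.
move=> B /andP[BA BA0].
apply: etrans (IH B BA BA0); rewrite /grp; apply: eq_bigl => i.
by case: eqP => [->|]; rewrite ?andbF //= andbT BA.
Qed.

Lemma LI (A0 : {set 'I_d}) z0 : A0 \subset M -> grp A0 z0 = 0.
Proof.
move: {2}#|A0| (leqnn #|A0|) => n.
elim: n A0 => [|n IH] A0 hn A0M; apply: LI_step => // B BA BA0;
  have lt : (#|B| < #|A0|)%N by rewrite proper_card // properEneq BA0.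
  by move: (leq_trans lt hn).
by apply: IH; [rewrite -ltnS (leq_trans lt hn) | apply: subset_trans BA A0M].
Qed.
End LIsec.

Lemma alt_pair (T : {set {set 'I_d}}) (m0 : {set 'I_d}) (phi : {set 'I_d} -> R) :
  m0 \in T -> (forall X, phi (X :&: m0) = phi X) ->
  \sum_(G in powerset T | G != set0) (-1) ^+ (#|G|.+1) * phi (\bigcap_(m in G) m)
  = phi setT.
Proof.
move=> m0T Hphi.
pose F (G : {set {set 'I_d}}) := (-1) ^+ #|G| * phi (\bigcap_(m in G) m).
pose tg (G : {set {set 'I_d}}) := if m0 \in G then G :\ m0 else m0 |: G.
have tgK : involutive tg.
  move=> G; rewrite /tg; case: (boolP (m0 \in G)) => mG.
    by rewrite setD11 /= setD1K.
  by rewrite setU11 setU1K.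
have Ftg G : F (tg G) = - F G.
  rewrite /F /tg; case: ifP => mG.
    rewrite [#|G|](cardsD1 m0) mG /= ?add1n exprS mulN1r mulNr opprK.
    by rewrite [\bigcap_(m in G) m](big_setD1 _ mG) /= setIC Hphi.
  rewrite cardsU1 mG /= ?add1n exprS mulN1r mulNr.
  by rewrite big_setU1 ?mG //= setIC Hphi.
have S0 : \sum_(G in powerset T) F G = 0.
  have E : \sum_(G in powerset T) F G = \sum_(G in powerset T) F (tg G).
    rewrite (reindex_inj (inv_inj tgK)) /=; apply: eq_bigl => G.
    rewrite !powersetE /tg; case: ifP => mG.
      apply/idP/idP => [sGT|]; last by move/subsetP=> s; apply/subsetP=> y /setD1P[_ /s].
      by apply/subsetP => y yG; case: (eqVneq y m0) => [->//|ym];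
         apply: (subsetP sGT); rewrite !inE ym yG.
    by rewrite subUset sub1set m0T.
  have : \sum_(G in powerset T) F G = - \sum_(G in powerset T) F G.
    by rewrite {1}E -sumrN; apply: eq_bigr => G _; rewrite Ftg.
  move=> H; lra.
move: S0; rewrite (bigD1 set0) ?powersetE ?sub0set //= => S0.
have -> : phi setT = F set0 by rewrite /F cards0 expr0 mul1r big_set0.
have -> : \sum_(G in powerset T | G != set0) (-1) ^+ (#|G|.+1) * phi (\bigcap_(m in G) m)
   = - \sum_(G in powerset T | G != set0) F G.
  by rewrite -sumrN; apply: eq_bigr => G _; rewrite /F exprS mulN1r mulNr.
lra.
Qed.

Lemma max_above (F : {set {set 'I_d}}) u : u \in F -> exists2 m, m \in maxfam F & u \subset m.
Proof.
move=> uF.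
have P0 : (u \in F) && (u \subset u) by rewrite uF subxx.
case: (@arg_maxnP _ u (fun m => (m \in F) && (u \subset m)) (fun m => #|m|) P0) => m /andP[mF um] Hm.
exists m => //; rewrite /maxfam inE mF /=.
apply/forall_inP => m' m'F; apply/implyP => mm'.
have := Hm m'; rewrite m'F (subset_trans um mm') => /(_ isT) cm.
by rewrite eq_sym eqEcard mm'; apply: cm.
Qed.

Lemma maxfam_sub (F : {set {set 'I_d}}) : maxfam F \subset F.
Proof. by apply/subsetP => m; rewrite inE => /andP[]. Qed.

Lemma chi0 z x : chi set0 z x = 1.
Proof. by rewrite /chi; case: forall_inP => // H; exfalso; apply: H => j; rewrite inE. Qed.

Lemma Pr0 z : Pr set0 z = 1.
Proof. by rewrite /Pr -[RHS]pi_sum; apply: eq_bigr => y _; rewrite chi0 mulr1. Qed.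

Lemma Pr_gt0 (B : {set 'I_d}) z : B \subset M -> 0 < Pr B z.
Proof.
move=> BM; rewrite /Pr (bigD1 (pt B z)) //=.
have -> : chi B z (pt B z) = 1.
  rewrite /chi; case: forall_inP => // H; exfalso; apply: H => j jB.
  by rewrite ptE inE jB (subsetP BM j jB) /= eqxx.
rewrite mulr1 ltr_pwDl ?pi_pos // sumr_ge0 // => y _.
by apply: mulr_ge0; [exact: ltW | rewrite /chi; case: ifP].
Qed.

Lemma sum_idx (T : finType) (F : T -> R) :
  \sum_(i < #|{: T}|) F (enum_val i) = \sum_x F x.
Proof. by rewrite -big_enum_val. Qed.

Lemma Omega_E i j : Omega pi i j =
  pi (cellv i) *+ (i == j) - pi (cellv i) * pi (cellv j).
Proof.
by rewrite /Omega mxE mxE mxE mxE mxE big_ord1 mxE mxE mxE.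
Qed.

Lemma cov_mx p (A : 'M[R]_(#|{: cellT}|, p)) (v : 'cV[R]_(#|{: cellT}|)) k :
  (A^T *m Omega pi *m v) k 0 =
  cov (fun x => A (enum_rank x) k) (fun x => v (enum_rank x) 0).
Proof.
rewrite /cov /ip /mean.
rewrite -(sum_idx (fun x => pi x * A (enum_rank x) k * v (enum_rank x) 0)).
rewrite -(sum_idx (fun x => pi x * A (enum_rank x) k)).
rewrite -(sum_idx (fun x => pi x * v (enum_rank x) 0)).
under eq_bigr do rewrite !enum_valK.
under [X in _ - X * _]eq_bigr do rewrite !enum_valK.
under [X in _ - _ * X]eq_bigr do rewrite !enum_valK.
rewrite mxE.
have -> : \sum_(i < #|{: cellT}|) (A^T *m Omega pi) k i * v i 0 =
   \sum_(i < #|{: cellT}|) \sum_j (A j k * pi (cellv j) * v i 0 *+ (j == i) -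
      A j k * pi (cellv j) * (pi (cellv i) * v i 0)).
  apply: eq_bigr => i _; rewrite mxE mulr_suml; apply: eq_bigr => j _.
  rewrite mxE Omega_E mulrBr mulrBl; congr (_ - _).
    by rewrite mulrnAr mulrnAl.
  by rewrite !mulrA.
rewrite exchange_big /=; under eq_bigr do rewrite sumrB.
rewrite sumrB; congr (_ - _).
  apply: eq_bigr => j _; rewrite (bigD1 j) //= eqxx mulr1n big1 ?addr0.
    by rewrite /cellv [A j k * _]mulrC.
  by move=> i ne; rewrite eq_sym (negbTE ne) mulr0n.
rewrite mulr_suml; apply: eq_bigr => j _; rewrite mulr_sumr.
by apply: eq_bigr => i _; rewrite /cellv [A j k * _]mulrC.
Qed.


Section Main.
Variables (N I : {set {set 'I_d}}) (h : {set 'I_d} -> {set 'I_d}) (jh : {set 'I_d} -> assign r).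
Hypothesis HN : forall n, n \in N -> n \proper M.
Hypothesis HIV : I \subset Vfam N.
Local Notation Rf := (Vfam N :\: I).
Local Notation K := (maxfam (I :|: Rf)).
Hypothesis Hi : forall t, t \in I ->
  [/\ h t \subset M, [disjoint t & h t] & forall j, j \in h t -> jh t j != ord0].
Hypothesis Hii : forall t, t \in I ->
  (\sum_(G in Kth K t (h t)) (-1) ^+ #|G| : int) != 0.
Variable rk : {set 'I_d} -> nat.
Hypothesis Hiii : forall t, t \in I -> forall G, G \in Kbar K t (h t) ->
  let s := (\bigcap_(m in G) m) :&: (t :|: h t) in
  s \in Rf \/ (s \in I /\ (rk s < rk t)%N).

Definition tk (S : {set {set 'I_d}}) (k : colT r S) := (val k).1.
Definition ck (S : {set {set 'I_d}}) (k : colT r S) := (val k).2.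

Lemma colT_in S (k : colT r S) : tk k \in S.
Proof. by case/andP: (valP k). Qed.

Lemma colT_supp S (k : colT r S) : supp_is (tk k) (ck k).
Proof. by case/andP: (valP k). Qed.

Lemma colT_nz S (k : colT r S) : [forall j in tk k, ck k j != ord0].
Proof.
by apply/forall_inP => j jt; have /forallP /(_ j) := colT_supp k; rewrite jt => /eqP <-.
Qed.

Lemma colT_eq S (k k' : colT r S) : tk k = tk k' ->
  [forall j in tk k, ck k j == ck k' j] -> k = k'.
Proof.
move=> et /forall_inP ec.
have /forallP s1 := colT_supp k; have /forallP s2 := colT_supp k'.
apply: val_inj; apply: injective_projections => //.
apply: (iffLR (ffunP _ _)) => j.
case: (boolP (j \in tk k)) => jt; first by apply/eqP; apply: ec.
have := s1 j; have := s2 j; rewrite -et (negbTE jt).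
move=> /eqP /esym /negbFE /eqP e2 /eqP /esym /negbFE /eqP e1.
by rewrite /ck in e1 e2; rewrite e1 e2.
Qed.

Lemma V_sub (t : {set 'I_d}) : t \in Vfam N -> t \subset M.
Proof.
rewrite inE => /andP[_ /exists_inP[n nN tn]].
by apply: subset_trans tn (proper_sub (HN nN)).
Qed.

Lemma V_ne0 (t : {set 'I_d}) : t \in Vfam N -> t != set0.
Proof. by rewrite inE => /andP[]. Qed.

Lemma V_down (t t' : {set 'I_d}) : t \in Vfam N -> t' \subset t -> (t' == set0) || (t' \in Vfam N).
Proof.
rewrite inE => /andP[_ /exists_inP[n nN tn]] tt'.
case: (eqVneq t' set0) => [->//|ne]; rewrite /= inE ne /=.
by apply/exists_inP; exists n => //; apply: subset_trans tt' tn.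
Qed.

Lemma IRV : I :|: Rf = Vfam N.
Proof.
apply/setP => t; rewrite in_setU in_setD; case: (boolP (t \in I)) => //= tI.
by rewrite (subsetP HIV t tI).
Qed.

Lemma KV (m : {set 'I_d}) : m \in K -> m \in Vfam N.
Proof. by move/(subsetP (maxfam_sub _)); rewrite IRV. Qed.

Lemma I_V (t : {set 'I_d}) : t \in I -> t \in Vfam N.
Proof. exact: (subsetP HIV). Qed.

Lemma R_V (t : {set 'I_d}) : t \in Rf -> t \in Vfam N.
Proof. by rewrite inE => /andP[]. Qed.

Definition AH (k : colT r I) := tk k :|: h (tk k).
Definition zH (k : colT r I) : assign r :=
  [ffun j => if j \in tk k then ck k j else jh (tk k) j].

Lemma AH_M k : AH k \subset M.
Proof.
case: (Hi (colT_in k)) => hM _ _.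
by rewrite subUset hM andbT V_sub ?I_V ?colT_in.
Qed.

Lemma zH_nz k : [forall j in AH k, zH k j != ord0].
Proof.
apply/forall_inP => j; rewrite inE ffunE => /orP[jt|jh'].
  by rewrite jt; move/forall_inP: (colT_nz k); apply.
case: ifP => jt; first by move/forall_inP: (colT_nz k); apply.
by case: (Hi (colT_in k)) => _ _; apply.
Qed.

Lemma GH_chi k (x : cellT) :
  [forall j in tk k, val x j == ck k j] && [forall j in h (tk k), val x j == jh (tk k) j]
  = [forall j in AH k, val x j == zH k j].
Proof.
case: (Hi (colT_in k)) => _ dis _.
apply/andP/forall_inP => [[/forall_inP H1 /forall_inP H2] j|H].
  rewrite inE ffunE => /orP[jt|jh']; first by rewrite jt; apply: H1.
  by rewrite (disjointFl dis jh'); apply: H2.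
split; apply/forall_inP => j jt.
  by have := H j; rewrite inE ffunE jt /=; apply.
by have := H j; rewrite inE ffunE jt orbT (disjointFl dis jt); apply.
Qed.

Section Core.
Variables (w : colT r I -> R) (be : colT r Rf -> R).
Definition e (x : cellT) :=
  \sum_k w k * chi (AH k) (zH k) x - \sum_k be k * chi (tk k) (ck k) x.
Hypothesis HcI : forall k : colT r I, cov (chi (tk k) (ck k)) e = 0.
Hypothesis HcR : forall k : colT r Rf, cov (chi (tk k) (ck k)) e = 0.

Lemma good (B : {set 'I_d}) (z : assign r) : (B == set0) || (B \in Vfam N) ->
  [forall j in B, z j != ord0] -> cov e (chi B z) = 0.
Proof.
move=> /orP[/eqP->|BV] /forall_inP nz.
  by rewrite (@cov_ext2 _ _ (fun _ => 1)) ?cov1 // => x; apply: chi0.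
pose zn : assign r := [ffun j => if j \in B then z j else ord0].
have sp : supp_is B zn.
  apply/forallP => j; rewrite ffunE; case: (boolP (j \in B)) => jB /=.
    by rewrite nz.
  by rewrite eqxx.
have chiE : chi B z =1 chi B zn.
  move=> x; rewrite /chi; congr (if _ then _ else _).
  by apply: eq_forallb_in => j jB; rewrite ffunE jB.
rewrite (cov_ext2 _ chiE) covC.
case: (boolP (B \in I)) => BI.
  have P : ((B, zn).1 \in I) && supp_is (B, zn).1 (B, zn).2 by rewrite /= BI sp.
  exact: (HcI (Sub (B, zn) P)).
have P : ((B, zn).1 \in Rf) && supp_is (B, zn).1 (B, zn).2.
  by rewrite /= inE BI BV sp.
exact: (HcR (Sub (B, zn) P)).
Qed.

Definition idx := (colT r I + colT r Rf)%type.
Definition al0 (i : idx) := match i with inl k => w k | inr k => - be k end.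
Definition A0 (i : idx) := match i with inl k => AH k | inr k => tk k end.
Definition z0 (i : idx) := match i with inl k => zH k | inr k => ck k end.

Lemma eE : e =1 fun x => \sum_(i : idx) al0 i * chi (A0 i) (z0 i) x.
Proof.
move=> x; rewrite /e big_sumType /=; congr (_ + _).
by rewrite -sumrN; apply: eq_bigr => k _; rewrite mulNr.
Qed.

Lemma A0M i : A0 i \subset M.
Proof. by case: i => k /=; [apply: AH_M | apply: V_sub; apply: R_V; apply: colT_in]. Qed.

Lemma A0nz i : [forall j in A0 i, z0 i j != ord0].
Proof. by case: i => k /=; [apply: zH_nz | apply: colT_nz]. Qed.

Lemma Ex_e (s : {set 'I_d}) x : Ex s e x =
  \sum_(i : idx) (al0 i * Pr (A0 i :\: s) (z0 i)) * chi (A0 i :&: s) (z0 i) x.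
Proof. by rewrite (Ex_ext _ eE) Ex_sumchi. Qed.

Lemma Exc (s : {set 'I_d}) : (forall B : {set 'I_d}, B \subset s -> (B == set0) || (B \in Vfam N)) ->
  forall x, Ex s e x = mean e.
Proof.
move=> Hs x; rewrite -(mean_Ex s e); apply: cov0_const.
rewrite cov_Ex.
have E2 : Ex s (Ex s e) =1 fun x => \sum_(i : idx)
   ((al0 i * Pr (A0 i :\: s) (z0 i)) * Pr ((A0 i :&: s) :\: s) (z0 i)) *
    chi ((A0 i :&: s) :&: s) (z0 i) x.
  move=> y; rewrite (Ex_ext _ (Ex_e s)).
  by rewrite (Ex_sumchi _ (fun i => al0 i * Pr (A0 i :\: s) (z0 i))).
rewrite (cov_ext2 _ E2) cov_sum big1 // => i _.
rewrite good ?mulr0 //.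
  by apply: Hs; rewrite -setIA setIid subsetIr.
apply/forall_inP => j; rewrite !inE => /andP[/andP[jA _] _].
by move/forall_inP: (A0nz i); apply.
Qed.
Local Notation cG G := (\bigcap_(m in G) m).
Local Notation sgnG G := ((-1) ^+ (#|G|.+1) : R).
Definition PK (G : {set {set 'I_d}}) := (G \in powerset K) && (G != set0).

Lemma Gs (G : {set {set 'I_d}}) : G \in powerset K -> G != set0 ->
  forall B : {set 'I_d}, B \subset cG G -> (B == set0) || (B \in Vfam N).
Proof.
move=> GK /set0Pn[m mG] B BG.
have mK : m \in K by move: GK; rewrite powersetE => /subsetP; apply.
by apply: (V_down (KV mK)); apply: subset_trans BG (bigcap_inf _ mG).
Qed.

Definition kap := \sum_(G in powerset K | G != set0) sgnG G * mean e.

Definition alI (p : colT r I * {set {set 'I_d}}) :=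
  if PK p.2 then sgnG p.2 * (w p.1 * Pr (AH p.1 :\: cG p.2) (zH p.1)) else 0.

Lemma key x :
  \sum_(p : colT r I * {set {set 'I_d}}) alI p * chi (AH p.1 :&: cG p.2) (zH p.1) x
  + \sum_(k : colT r Rf) (- be k) * chi (tk k) (ck k) x = kap.
Proof.
have H : \sum_(G in powerset K | G != set0) sgnG G * Ex (cG G) e x = kap.
  by apply: eq_bigr => G /andP[GK G0]; rewrite Exc //; apply: Gs.
rewrite -H; symmetry.
under eq_bigr do rewrite Ex_e mulr_sumr.
rewrite exchange_big big_sumType /=.
congr (_ + _).
  rewrite -(pair_bigA _ (fun k G => alI (k, G) * chi (AH k :&: cG G) (zH k) x)) /=.
  apply: eq_bigr => k _; rewrite [LHS]big_mkcond /=; apply: eq_bigr => G _.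
  rewrite /alI /PK /=; case: ifP => _; last by rewrite mul0r.
  by rewrite mulrA.
apply: eq_bigr => k _.
have kF : tk k \in I :|: Rf by rewrite IRV; apply: R_V; apply: colT_in.
have [m0 m0K km0] := max_above kF.
pose phi X := Pr (tk k :\: X) (ck k) * chi (tk k :&: X) (ck k) x.
have := @alt_pair K m0 phi m0K.
have Hphi : forall X, phi (X :&: m0) = phi X.
  move=> X; rewrite /phi setDIr.
  have -> : tk k :\: m0 = set0 by apply/eqP; rewrite setD_eq0.
  by rewrite setU0 setICA (setIidPl km0) setIC.
move=> /(_ Hphi) HH.
have HH' : phi setT = chi (tk k) (ck k) x by rewrite /phi setDT setIT Pr0 mul1r.
rewrite -HH' -HH mulr_sumr; apply: eq_bigr => G _.
by rewrite /phi -!mulrA mulrCA.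
Qed.

Definition iota := ((colT r I * {set {set 'I_d}}) + colT r Rf + unit)%type.
Definition z00 : assign r := [ffun j => ord0].
Definition alL (i : iota) : R :=
  match i with inl (inl p) => alI p | inl (inr k) => - be k | inr _ => - kap end.
Definition AL (i : iota) : {set 'I_d} :=
  match i with inl (inl p) => AH p.1 :&: cG p.2 | inl (inr k) => tk k | inr _ => set0 end.
Definition zL (i : iota) : assign r :=
  match i with inl (inl p) => zH p.1 | inl (inr k) => ck k | inr _ => z00 end.

Lemma sum_unit (F : unit -> R) : \sum_(i : unit) F i = F tt.
Proof. by rewrite (big_pred1 tt) //; case. Qed.

Lemma LIsum x : \sum_i alL i * chi (AL i) (zL i) x = 0.
Proof.
rewrite !big_sumType /= sum_unit /= key chi0 mulr1.
by rewrite addrN.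
Qed.

Lemma ALM i : AL i \subset M.
Proof.
case: i => [[p|k]|[]] /=; last exact: sub0set.
  by apply: subset_trans (subsetIl _ _) (AH_M _).
by apply: V_sub; apply: R_V; apply: colT_in.
Qed.

Lemma ALnz i : [forall j in AL i, zL i j != ord0].
Proof.
case: i => [[p|k]|[]] /=; last by apply/forall_inP => j; rewrite inE.
  apply/forall_inP => j; rewrite inE => /andP[jA _].
  by move/forall_inP: (zH_nz p.1); apply.
exact: colT_nz.
Qed.

Lemma Kth_prop (t : {set 'I_d}) G : G \in Kth K t (h t) ->
  [/\ PK G, t \subset cG G & h t :&: cG G = set0].
Proof.
rewrite inE powersetE => /andP[GKt /andP[G0 /eqP hG]].
have GK : G \subset K.
  by apply: subset_trans GKt _; apply/subsetP => m; rewrite inE => /andP[].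
split => //; first by rewrite /PK powersetE GK G0.
apply/bigcapsP => m mG; have := subsetP GKt m mG; by rewrite inE => /andP[].
Qed.

Lemma AH_cap (k : colT r I) G : G \in Kth K (tk k) (h (tk k)) ->
  AH k :&: cG G = tk k /\ AH k :\: cG G = h (tk k).
Proof.
case/Kth_prop => _ tG hG; rewrite /AH setIUl setDUl hG setU0 (setIidPl tG).
split => //.
have -> : tk k :\: cG G = set0 by apply/eqP; rewrite setD_eq0.
rewrite set0U; apply/setDidPl; by rewrite -setI_eq0 hG.
Qed.

Lemma core_main k : w k = 0.
Proof.
apply/eqP; apply: contraT => wk.
case: (@arg_maxnP _ k (fun k' => w k' != 0) (fun k' => rk (tk k')) wk) => k0 wk0 Hmax.
have t0I : tk k0 \in I := colT_in k0.
have := @LI iota alL AL zL ALM ALnz LIsum (tk k0) (ck k0) (V_sub (I_V t0I)).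
rewrite /grp.
have E : forall i, (if (AL i == tk k0) && [forall j in tk k0, ck k0 j == zL i j]
     then alL i else 0) =
   match i with inl (inl p) =>
     if (p.1 == k0) && (p.2 \in Kth K (tk k0) (h (tk k0))) then alI p else 0
   | _ => 0 end.
  case=> [[[k' G]|k']|[]] /=; last first.
  - by rewrite eq_sym (negbTE (V_ne0 (I_V t0I))).
  - case: eqP => //= e'; exfalso; move: (colT_in k'); rewrite e' inE t0I.
    by [].
  have [al0|alN] := eqVneq (alI (k', G)) 0.
    by rewrite al0; case: ifP; case: ifP.
  have PKG : PK G by move: alN; rewrite /alI; case: ifP => // _; rewrite eqxx.
  have wk' : w k' != 0.
    move: alN; rewrite /alI PKG /=; apply: contraNneq => ->.
    by rewrite mul0r mulr0.
  case: (boolP (G \in Kth K (tk k') (h (tk k')))) => GK.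
    have [A_eq _] := AH_cap GK; rewrite A_eq.
    case: (eqVneq k' k0) => [ekk|ne].
      subst k'; rewrite eqxx GK /=.
      have -> : [forall j in tk k0, ck k0 j == zH k0 j].
        by apply/forall_inP => j jt; rewrite ffunE jt.
      by [].
    rewrite /=.
    case: ifP => // /andP[/eqP et /forall_inP ec]; exfalso; apply: (negP ne); apply/eqP.
    apply: colT_eq => //; apply/forall_inP => j jt.
    have := ec j; rewrite -et => /(_ jt); rewrite ffunE jt eq_sym; by [].
  have GB : G \in Kbar K (tk k') (h (tk k')).
    by rewrite [G \in Kbar _ _ _]inE; case/andP: PKG => -> ->.
  have RHS0 : ((k' == k0) && (G \in Kth K (tk k0) (h (tk k0)))) = false.
    by case: eqP => //= ekk; subst; rewrite (negbTE GK).
  rewrite RHS0; case: ifP => // /andP[/eqP At _]; exfalso.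
  have := Hiii (colT_in k') GB; rewrite /= setIC -/(AH k') At.
  case=> [t0R|[_ lt]].
    by move: t0R; rewrite inE t0I.
  by have := Hmax k' wk'; rewrite /= leqNgt lt.
rewrite big_mkcond (eq_bigr _ (fun i _ => E i)) !big_sumType /= sum_unit.
rewrite big1_eq !addr0.
rewrite -(pair_bigA _ (fun k G =>
   if (k == k0) && (G \in Kth K (tk k0) (h (tk k0))) then alI (k, G) else 0)) /=.
rewrite (bigD1 k0) //= [X in _ + X]big1 ?addr0; last first.
  by move=> k' ne; apply: big1 => G _; rewrite (negbTE ne).
rewrite -big_mkcond /= eqxx.
have -> : \sum_(G | true && (G \in Kth K (tk k0) (h (tk k0)))) alI (k0, G) =
    (\sum_(G in Kth K (tk k0) (h (tk k0))) sgnG G) * (w k0 * Pr (h (tk k0)) (zH k0)).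
  rewrite mulr_suml; apply: eq_bigr => G GK.
  have [PKG _ _] := Kth_prop GK; have [_ Dh] := AH_cap GK.
  by rewrite /alI /= PKG Dh.
have -> : \sum_(G in Kth K (tk k0) (h (tk k0))) sgnG G =
    - ((\sum_(G in Kth K (tk k0) (h (tk k0))) (-1) ^+ #|G| : int)%:~R).
  rewrite mulrz_sumr -sumrN; apply: eq_bigr => G _.
  by rewrite intr_sign exprS mulN1r.
case: (Hi t0I) => hM _ _.
move/eqP; rewrite !mulf_eq0 oppr_eq0 intr_eq0 (negbTE (Hii t0I)) (negbTE wk0) /=.
by rewrite gt_eqF ?Pr_gt0.
Qed.

End Core.

Local Notation nC := #|{: cellT}|.

Lemma Gmx_E S (i : 'I_nC) (k : 'I_#|{: colT r S}|) :
  (@Gmx R d r M S) i k = chi (tk (colv k)) (ck (colv k)) (cellv i).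
Proof. by rewrite mxE. Qed.

Lemma GHmx_E (i : 'I_nC) (k : 'I_#|{: colT r I}|) :
  (@GHmx R d r M I h jh) i k = chi (AH (colv k)) (zH (colv k)) (cellv i).
Proof. by rewrite mxE /chi -GH_chi. Qed.

Lemma col_cov S (k : colT r S) (v : 'cV[R]_nC) :
  ((@Gmx R d r M S)^T *m Omega pi *m v) (enum_rank k) 0 =
  cov (chi (tk k) (ck k)) (fun x => v (enum_rank x) 0).
Proof.
rewrite cov_mx; apply: cov_ext => x.
by rewrite Gmx_E /colv /cellv !enum_rankK.
Qed.

Lemma mulG_E S (u : 'cV[R]_#|{: colT r S}|) x :
  ((@Gmx R d r M S) *m u) (enum_rank x) 0 =
  \sum_k u (enum_rank k) 0 * chi (tk k) (ck k) x.
Proof.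
rewrite mxE -(sum_idx (fun k => u (enum_rank k) 0 * chi (tk k) (ck k) x)).
by apply: eq_bigr => k _; rewrite Gmx_E /colv /cellv !enum_valK enum_rankK mulrC.
Qed.

Lemma mulGH_E (u : 'cV[R]_#|{: colT r I}|) x :
  ((@GHmx R d r M I h jh) *m u) (enum_rank x) 0 =
  \sum_k u (enum_rank k) 0 * chi (AH k) (zH k) x.
Proof.
rewrite mxE -(sum_idx (fun k => u (enum_rank k) 0 * chi (AH k) (zH k) x)).
by apply: eq_bigr => k _; rewrite GHmx_E /colv /cellv !enum_valK enum_rankK mulrC.
Qed.

Local Notation GR := (@Gmx R d r M Rf).
Local Notation GI := (@Gmx R d r M I).
Local Notation GH := (@GHmx R d r M I h jh).

Definition zz : assign r := [ffun j => ord0].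

Lemma FRR_unit :
  ((@Gmx R d r M Rf)^T *m Omega pi *m (@Gmx R d r M Rf)) \in unitmx.
Proof.
rewrite -unitmx_tr -row_free_unit; apply: inj_row_free => v Hv.
have H0 : GR^T *m Omega pi *m GR *m v^T = 0.
  by rewrite -[_ *m v^T]trmxK trmx_mul trmxK Hv trmx0.
pose g x := (GR *m v^T) (enum_rank x) 0.
pose u (k : colT r Rf) := v^T (enum_rank k) 0.
have gE : g =1 fun x => \sum_k u k * chi (tk k) (ck k) x by move=> x; apply: mulG_E.
have Hc (k : colT r Rf) : cov (chi (tk k) (ck k)) g = 0.
  by rewrite /g -col_cov mulmxA H0 mxE.
have Hgg : cov g g = 0.
  rewrite (cov_ext2 _ gE) cov_sum big1 // => k _.
  by rewrite covC Hc mulr0.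
have gc := cov0_const Hgg.
pose al (i : (colT r Rf + unit)%type) :=
  match i with inl k => u k | inr _ => - mean g end.
pose A (i : (colT r Rf + unit)%type) :=
  match i with inl k => tk k | inr _ => set0 end.
pose z (i : (colT r Rf + unit)%type) :=
  match i with inl k => ck k | inr _ => zz end.
have AM i : A i \subset M.
  by case: i => [k|_] /=; [apply: V_sub; apply: R_V; apply: colT_in | apply: sub0set].
have Anz i : [forall j in A i, z i j != ord0].
  by case: i => [k|_] /=; [apply: colT_nz | apply/forall_inP => j; rewrite inE].
have Hsum x : \sum_i al i * chi (A i) (z i) x = 0.
  rewrite big_sumType /= (sum_unit (fun _ => - mean g * chi set0 zz x)) chi0 mulr1 -gE gc.
  by rewrite addrN.
have uk (k : colT r Rf) : u k = 0.
  have := LI AM Anz Hsum (A0 := tk k) (ck k) (V_sub (R_V (colT_in k))).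
  rewrite /grp big_sumType /= [X in _ + X]big1 ?addr0; last first.
    by move=> [] /=; rewrite eq_sym (negbTE (V_ne0 (R_V (colT_in k)))).
  rewrite (big_pred1 k) // => k'; rewrite /= /in_mem /=.
  apply/andP/eqP => [[/eqP et /forall_inP ec]|->]; last first.
    by split => //; apply/forall_inP.
  apply: colT_eq => //; apply/forall_inP => j jt.
  by rewrite eq_sym ec // -et.
apply/matrixP => i j; rewrite ord1 !mxE.
have := uk (enum_val j); rewrite /u enum_valK mxE => ->.
by [].
Qed.

Lemma final_unit : Qmx pi I Rf h jh \in unitmx.
Proof.
rewrite -unitmx_tr -row_free_unit; apply: inj_row_free => v Hv.
have Qw : Qmx pi I Rf h jh *m v^T = 0.
  by rewrite -[_ *m v^T]trmxK trmx_mul trmxK Hv trmx0.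
pose be := invmx (GR^T *m Omega pi *m GR) *m ((GR^T *m Omega pi *m GH) *m v^T).
pose evec := GH *m v^T - GR *m be.
have C1 : GI^T *m Omega pi *m evec = 0.
  rewrite -Qw /Qmx; cbv zeta beta.
  rewrite /evec /be mulmxBl mulmxBr !mulmxA.
  by [].
have C2 : GR^T *m Omega pi *m evec = 0.
  rewrite /evec /be mulmxBr mulmxA [X in _ - X]mulmxA mulKVmx ?FRR_unit //.
  by rewrite subrr.
pose w' (k : colT r I) := v^T (enum_rank k) 0.
pose be' (k : colT r Rf) := be (enum_rank k) 0.
have eE : (fun x => evec (enum_rank x) 0) =1 e w' be'.
  move=> x; rewrite /evec /e mxE [X in _ + X]mxE mulGH_E mulG_E.
  by [].
have HcI (k : colT r I) : cov (chi (tk k) (ck k)) (e w' be') = 0.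
  by rewrite -(cov_ext2 _ eE) -col_cov C1 mxE.
have HcR (k : colT r Rf) : cov (chi (tk k) (ck k)) (e w' be') = 0.
  by rewrite -(cov_ext2 _ eE) -col_cov C2 mxE.
have wk := core_main HcI HcR.
apply/matrixP => i j; rewrite ord1 !mxE.
have := wk (enum_val j); rewrite /w' enum_valK mxE => ->.
by [].
Qed.

End Main.

End Prob.

Theorem theorem2 (R : realFieldType) (d : nat) (r : 'I_d -> nat)
  (M : {set 'I_d}) (pi : cell r M -> R)
  (N : {set {set 'I_d}}) (a b : {set 'I_d}) (I : {set {set 'I_d}})
  (h : {set 'I_d} -> {set 'I_d}) (jh : {set 'I_d} -> assign r) :
  (* pi = p(M) is a strictly positive probability vector *)
  (forall x, 0 < pi x) ->
  \sum_x pi x = 1 ->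
  (* complete independence of (X_j), j in M *)
  (forall x : cell r M, pi x = \prod_(j in M) marg pi (val x j)) ->
  (* the N_k are proper subsets of M *)
  (forall n, n \in N -> n \proper M) ->
  (* a, b disjoint nonempty subsets of M *)
  a \subset M -> b \subset M -> a != set0 -> b != set0 -> [disjoint a & b] ->
  I \subset Vfam N :&: Afam M a b ->
  valid_replacement M I (Vfam N :\: I) h jh ->
  Qmx pi I (Vfam N :\: I) h jh \in unitmx.
Proof.
move=> pos sum1 ind HN aM bM a0 b0 ab HI [Hi [Hii [rk [_ [_ Hiii]]]]].
have HIV : I \subset Vfam N by apply: subset_trans HI (subsetIl _ _).
exact: (final_unit pos sum1 ind HN HIV Hi Hii Hiii).
Qed.
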